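(* Let $R$ be a total preorder on $\Omega$ and $B : \Omega \to \mathbb{R}$ a bound. Then $B$ is consistent with $R$ if and only if both of the following hold: $B(\mathbf{x}) \le B(\mathbf{y})$ whenever $\mathbf{x} <_R \mathbf{y}$, and $B(\mathbf{x}) = B(\mathbf{y})$ whenever $\mathbf{x} \sim_R \mathbf{y}$.
   Context: $\Omega$ is a finite set (of samples). A total preorder $R$ on $\Omega$ is a reflexive, transitive relation $\lesssim_R$ such that for all $\mathbf{x},\mathbf{y}$, $\mathbf{x} \lesssim_R \mathbf{y}$ or $\mathbf{y} \lesssim_R \mathbf{x}$; write $\mathbf{x} \sim_R \mathbf{y}$ if both hold and $\mathbf{x} <_R \mathbf{y}$ if $\mathbf{x} \lesssim_R \mathbf{y}$ but not $\mathbf{x} \sim_R \mathbf{y}$. A total order $T$ on $\Omega$ (with $\le_T$, $<_T$) is a total preorder in which $\mathbf{x} \sim_T \mathbf{y}$ implies $\mathbf{x} = \mathbf{y}$. A bound is any function $B : \Omega \to \mathbb{R}$. $B$ is consistent with a total order $T$ if $\mathbf{x} \le_T \mathbf{y}$ implies $B(\mathbf{x}) \le B(\mathbf{y})$. A total order $T$ agrees with a total preorder $R$ if $\mathbf{x} <_R \mathbf{y}$ implies $\mathbf{x} <_T \mathbf{y}$ for all $\mathbf{x},\mathbf{y} \in \Omega$. $B$ is consistent with the preorder $R$ if it is consistent with every total order that agrees with $R$. *)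

(* Defs.v *)
From mathcomp Require Import all_boot.
From Stdlib Require Import Reals.
Open Scope R_scope.

Section Defs.
Context {Omega : finType}.

Definition reflexive_rel (le : Omega -> Omega -> Prop) := forall x, le x x.
Definition transitive_rel (le : Omega -> Omega -> Prop) :=
  forall x y z, le x y -> le y z -> le x z.
Definition total_rel (le : Omega -> Omega -> Prop) := forall x y, le x y \/ le y x.

Definition total_preorder (le : Omega -> Omega -> Prop) :=
  reflexive_rel le /\ transitive_rel le /\ total_rel le.

Definition equiv_of (le : Omega -> Omega -> Prop) x y := le x y /\ le y x.
Definition strict_of (le : Omega -> Omega -> Prop) x y := le x y /\ ~ equiv_of le x y.

Definition total_order (le : Omega -> Omega -> Prop) :=
  total_preorder le /\ (forall x y, equiv_of le x y -> x = y).

Definition consistent_with_order (B : Omega -> R) (T : Omega -> Omega -> Prop) :=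
  forall x y, T x y -> B x <= B y.

Definition agrees_with (T R0 : Omega -> Omega -> Prop) :=
  forall x y, strict_of R0 x y -> strict_of T x y.

Definition consistent_with_preorder (B : Omega -> R) (R0 : Omega -> Omega -> Prop) :=
  forall T, total_order T -> agrees_with T R0 -> consistent_with_order B T.
End Defs.

(* Main.v *)
Require Import Defs.
From mathcomp Require Import all_boot.
From Stdlib Require Import Reals Classical Lra.
Open Scope R_scope.

Section H.
Variable Omega : finType.
Variable R0 : Omega -> Omega -> Prop.
Hypothesis HR : total_preorder R0.

Definition kle (s : bool) (a b : Omega) : bool :=
  if s then (leq (enum_rank a) (enum_rank b))
  else (leq (enum_rank b) (enum_rank a)).

Definition Ts (s : bool) (a b : Omega) : Prop :=
  strict_of R0 a b \/ (equiv_of R0 a b /\ kle s a b).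

Lemma kle_refl s a : kle s a a.
Proof. by case: s; rewrite /kle leqnn. Qed.
Lemma kle_trans s a b c : kle s a b -> kle s b c -> kle s a c.
Proof. case: s; rewrite /kle => H1 H2; [exact: leq_trans H1 H2 | exact: leq_trans H2 H1]. Qed.
Lemma kle_total s a b : kle s a b \/ kle s b a.
Proof. case: s; rewrite /kle; case: (leqP (enum_rank a) (enum_rank b)) => h; auto; move/ltnW: h; auto. Qed.
Lemma kle_anti s a b : kle s a b -> kle s b a -> a = b.
Proof.
move=> h1 h2; apply: enum_rank_inj; apply: val_inj => /=.
by case: s h1 h2; rewrite /kle => h1 h2; apply/anti_leq; rewrite ?h1 ?h2.
Qed.

Lemma Ts_total_order s : total_order (Ts s).
Proof.
destruct HR as [Hrf [Htr Hto]].
unfold Ts, strict_of, equiv_of in *.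
split; [split; [|split]|].
- intro a; right; split; [split; apply Hrf | apply kle_refl].
- intros a b c H1 H2.
  destruct H1 as [[h1 n1]|[[h1 h1'] k1]]; destruct H2 as [[h2 n2]|[[h2 h2'] k2]].
  + left; split; [eauto|]. intros [_ hc]; apply n1; split; eauto.
  + left; split; [eauto|]. intros [_ hc]; apply n1; split; eauto.
  + left; split; [eauto|]. intros [_ hc]; apply n2; split; eauto.
  + right; split; [split; eauto| eapply kle_trans; eauto].
- intros a b.
  destruct (classic (R0 a b)) as [hab|hab]; destruct (classic (R0 b a)) as [hba|hba].
  + destruct (kle_total s a b); [left|right]; right; repeat split; auto.
  + left; left; split; auto; intros [_ h]; auto.
  + right; left; split; auto; intros [_ h]; auto.
  + exfalso; destruct (Hto a b); auto.
- intros a b [H1 H2].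
  destruct H1 as [[h1 n1]|[[h1 h1'] k1]]; destruct H2 as [[h2 n2]|[[h2 h2'] k2]].
  + exfalso; apply n1; auto.
  + exfalso; apply n1; auto.
  + exfalso; apply n2; auto.
  + eapply kle_anti; eauto.
Qed.

Lemma Ts_agrees s : agrees_with (Ts s) R0.
Proof.
intros x y [h n]. split; [left; split; auto|].
intros [_ [[h' n']|[[h' h''] _]]]; apply n; split; auto.
Qed.
End H.

Theorem lemma3 (Omega : finType) (R0 : Omega -> Omega -> Prop) (B : Omega -> R) :
  total_preorder R0 ->
  (consistent_with_preorder B R0 <->
   ((forall x y, strict_of R0 x y -> B x <= B y) /\
    (forall x y, equiv_of R0 x y -> B x = B y))).
Proof.
intros HR; split.
- intros HC.
  assert (Hle : forall x y, equiv_of R0 x y -> B x <= B y).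
  { intros x y He.
    apply (HC (Ts _ R0 (leq (enum_rank x) (enum_rank y)))).
    - apply Ts_total_order; auto.
    - apply Ts_agrees.
    - right; split; auto. rewrite /kle.
      by case: leqP => //= h; apply: ltnW. }
  split.
  + intros x y Hs. apply (HC (Ts _ R0 true)); [apply Ts_total_order; auto|apply Ts_agrees|left; auto].
  + intros x y He. apply Rle_antisym; apply Hle; auto.
    destruct He; split; auto.
- intros [H1 H2] T HT HA x y Txy.
  destruct HR as [Hrf [Htr Hto]].
  destruct (classic (R0 x y)) as [hxy|hxy]; destruct (classic (R0 y x)) as [hyx|hyx].
  + right; apply H2; split; auto.
  + apply H1; split; auto; intros [_ h]; auto.
  + exfalso. assert (Hs : strict_of R0 y x).
    { split; auto; intros [_ h]; auto. }
    destruct (HA y x Hs) as [HTyx Hn].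
    apply Hn; split; assumption.
  + exfalso; destruct (Hto x y) as [h|h]; [apply hxy|apply hyx]; exact h.
Qed.
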